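(* If $G$ is a $d$-regular Hadamard diagonalizable graph with $d$ odd, then for every vertex $u$ of $G$, $\uparrow^{2}G$ has Laplacian perfect state transfer between $(0,u)$ and $(1,u)$ at time $\frac{\pi}{2}$.
   Context: All graphs are simple, undirected and unweighted. A graph on $N$ vertices is Hadamard diagonalizable if its Laplacian matrix $L=D-A$ is diagonalizable by a Hadamard matrix, i.e. $L=\frac{1}{N}H\Lambda H^T$ for some diagonal $\Lambda$ and some $N\times N$ matrix $H$ with entries $\pm1$ satisfying $HH^T=NI$. The blow-up $\uparrow^{2}G$ has vertex set $\mathbb{Z}_2\times V(G)$, with $(l,u)\sim(m,v)$ iff $u\sim v$ in $G$. A graph with Laplacian $L$ has Laplacian perfect state transfer between $a,b$ at time $\tau$ if $\exp(i\tau L)\mathbf{e}_a=\gamma\mathbf{e}_b$ for some $\gamma\in\mathbb{C}$. *)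

(* Defs.v *)
From HB Require Import structures.
From mathcomp Require Import all_boot all_order all_algebra.
From mathcomp Require Import all_classical all_reals all_analysis.
From mathcomp.real_closed Require Import complex.

Set Implicit Arguments.
Unset Strict Implicit.
Unset Printing Implicit Defensive.

Import Order.TTheory GRing.Theory Num.Theory.
Import numFieldNormedType.Exports.
Local Open Scope ring_scope.

Definition simple_graph (V : finType) (e : rel V) : Prop :=
  symmetric e /\ irreflexive e.

Definition regular (V : finType) (e : rel V) (d : nat) : Prop :=
  forall v : V, #|[set w | e v w]| = d.

Definition laplacian (R : pzRingType) (V : finType) (e : rel V) : 'M[R]_#|V| :=
  \matrix_(i, j)
    ((if i == j then #|[set w | e (enum_val i) w]|%:R else 0)
     - (e (enum_val i) (enum_val j))%:R).

Definition hadamard (R : pzRingType) (N : nat) (H : 'M[R]_N) : Prop :=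
  (forall i j, H i j = 1 \/ H i j = -1) /\ H *m H^T = N%:R%:M.

Definition hadamard_diagonalizable (R : fieldType) (V : finType) (e : rel V) : Prop :=
  exists (H : 'M[R]_#|V|) (lam : 'rV[R]_#|V|),
    hadamard H /\
    laplacian R e = (#|V|%:R)^-1 *: (H *m diag_mx lam *m H^T).

Definition blowup2 (V : finType) (e : rel V) : rel ('I_2 * V) :=
  fun x y => e x.2 y.2.

Local Open Scope classical_set_scope.
Local Open Scope complex_scope.

Definition expmx_partial (R : rcfType) (n : nat) (A : 'M[R[i]]_n) (k : nat)
  : 'M[R[i]]_n :=
  \sum_(j < k) ((j`!%:R)^-1 *: A ^+ j).

Definition is_expmx (R : realType) (n : nat) (A E : 'M[R[i]]_n) : Prop :=
  forall i j : 'I_n,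
    ((fun k => complex.Re (expmx_partial A k i j)) @ \oo --> complex.Re (E i j)) /\
    ((fun k => complex.Im (expmx_partial A k i j)) @ \oo --> complex.Im (E i j)).

Definition basis_vec (R : pzRingType) (n : nat) (a : 'I_n) : 'cV[R]_n :=
  \col_j (j == a)%:R.

Definition laplacian_pst (R : realType) (V : finType) (e : rel V)
    (a b : V) (tau : R) : Prop :=
  exists E : 'M[R[i]]_#|V|,
    is_expmx (('i * tau%:C) *: map_mx (fun x : R => x%:C) (laplacian R e)) E /\
    exists gamma : R[i],
      E *m basis_vec _ (enum_rank a) = gamma *: basis_vec _ (enum_rank b).

(* Main.v *)
Require Import Defs.
From HB Require Import structures.
From mathcomp Require Import all_boot all_order all_algebra.
From mathcomp Require Import all_classical all_reals all_analysis.
From mathcomp.real_closed Require Import complex.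
Import Order.TTheory GRing.Theory Num.Theory.
Import numFieldNormedType.Exports.
From mathcomp Require Import ring lra.

Local Open Scope ring_scope.

Lemma sum_fin {T : finType} {M : nmodType} (F : 'I_#|T| -> M) :
  \sum_i F i = \sum_x F (enum_rank x).
Proof.
rewrite (reindex (@enum_rank T)) //; exists enum_val => x _; 
  [exact: enum_rankK | exact: enum_valK].
Qed.

Lemma mulmx_fin {T : finType} {R : pzSemiRingType} (f g : T -> T -> R) :
  (\matrix_(i, j) f (enum_val i) (enum_val j) : 'M[R]_#|T|) *m (\matrix_(i, j) g (enum_val i) (enum_val j) : 'M[R]_#|T|)
  = (\matrix_(i, j) \sum_x f (enum_val i) x * g x (enum_val j) : 'M[R]_#|T|).
Proof.
apply/matrixP => i j; rewrite !mxE sum_fin; apply: eq_bigr => x _.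
by rewrite !mxE enum_rankK.
Qed.

Lemma one_fin {T : finType} {R : pzSemiRingType} :
  (1%:M : 'M[R]_#|T|) = (\matrix_(i, j) (enum_val i == enum_val j)%:R : 'M[R]_#|T|).
Proof. by apply/matrixP => i j; rewrite !mxE (inj_eq enum_val_inj). Qed.

Definition MX {R : Type} {X : finType} (f : X -> X -> R) : 'M[R]_#|X| :=
  \matrix_(i, j) f (enum_val i) (enum_val j).

Lemma mulMX {T : finType} {R : pzSemiRingType} (f g : T -> T -> R) :
  MX f *m MX g = MX (fun x y => \sum_z f x z * g z y).
Proof. exact: mulmx_fin. Qed.

Lemma oneMX {T : finType} {R : pzSemiRingType} :
  (1%:M : 'M[R]_#|T|) = MX (fun x y => (x == y)%:R).
Proof. exact: one_fin. Qed.

Lemma MXE {T : finType} {R : Type} (f : T -> T -> R) i j : MX f i j = f (enum_val i) (enum_val j).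
Proof. by rewrite mxE. Qed.

Lemma MX_eq {T : finType} {R : Type} (f g : T -> T -> R) : (forall x y, f x y = g x y) -> MX f = MX g.
Proof. by move=> h; apply/matrixP => i j; rewrite !MXE h. Qed.

Lemma two_cases (m : 'I_2) : m = ord0 \/ m = ord_max.
Proof. by case: m => [[|[|]]] // Hm; [left|right]; apply/val_inj. Qed.

Lemma sum2 {M : nmodType} (F : 'I_2 -> M) : \sum_(l < 2) F l = F ord0 + F ord_max.
Proof.
rewrite big_ord_recl big_ord1; congr (_ + F _); exact/val_inj.
Qed.

Definition sg {R : pzRingType} (m l : 'I_2) : R := if m == ord0 then 1 else (-1) ^+ l.

Lemma sgsum {R : comPzRingType} (m m' : 'I_2) :
  \sum_(l < 2) (sg m l * sg m' l : R) = (m == m')%:R * 2.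
Proof.
rewrite sum2 /sg.
by case: (two_cases m) => ->; case: (two_cases m') => -> /=; rewrite /= ?expr0 ?expr1; ring.
Qed.

Lemma HtH_mx {R : fieldType} n (H : 'M[R]_n) :
  H *m H^T = n%:R%:M -> n%:R != 0 :> R -> H^T *m H = n%:R%:M.
Proof.
move=> HH n0.
have h1 : H *m (n%:R^-1 *: H^T) = 1%:M.
  by rewrite -scalemxAr HH scale_scalar_mx mulVf.
have := mulmx1C h1; rewrite -scalemxAl => h2.
have := congr1 (fun M => n%:R *: M) h2; rewrite scalerA mulfV // scale1r => ->.
by rewrite scale_scalar_mx mulr1.
Qed.

Lemma eigen_mx {R : fieldType} n (H L : 'M[R]_n) (lam : 'rV[R]_n) :
  H *m H^T = n%:R%:M -> n%:R != 0 :> R ->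
  L = n%:R^-1 *: (H *m diag_mx lam *m H^T) -> L *m H = H *m diag_mx lam.
Proof.
move=> HH n0 ->; rewrite -scalemxAl -mulmxA (@HtH_mx _ _ _ HH n0) mul_mx_scalar.
by rewrite scalerA mulVf // scale1r.
Qed.

Definition hf {R : Type} {V : finType} (H : 'M[R]_#|V|) (v w : V) := H (enum_rank v) (enum_rank w).

Lemma HtH_fun {R : fieldType} {V : finType} (H : 'M[R]_#|V|) (w w' : V) :
  H^T *m H = #|V|%:R%:M -> \sum_v hf H v w * hf H v w' = (w == w')%:R * #|V|%:R.
Proof.
move=> /matrixP /(_ (enum_rank w) (enum_rank w')); rewrite !mxE sum_fin (inj_eq enum_rank_inj) => h.
rewrite mulr_natl -h.
by apply: eq_bigr => v _; rewrite !mxE.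
Qed.

Lemma HHt_fun {R : fieldType} {V : finType} (H : 'M[R]_#|V|) (u u' : V) :
  H *m H^T = #|V|%:R%:M -> \sum_w hf H u w * hf H u' w = (u == u')%:R * #|V|%:R.
Proof.
move=> /matrixP /(_ (enum_rank u) (enum_rank u')); rewrite !mxE sum_fin (inj_eq enum_rank_inj) => h.
by rewrite mulr_natl -h; apply: eq_bigr => v _; rewrite !mxE.
Qed.

Lemma lap_row {R : fieldType} {V : finType} (e : rel V) (d : nat) (H : 'M[R]_#|V|) (lam : 'rV[R]_#|V|) :
  regular e d -> laplacian R e *m H = H *m diag_mx lam ->
  forall u w, d%:R * hf H u w - \sum_v (e u v)%:R * hf H v w = hf H u w * lam 0 (enum_rank w).
Proof.
move=> reg /matrixP LH u w; have := LH (enum_rank u) (enum_rank w).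
rewrite mul_mx_diag !mxE sum_fin => <-.
rewrite /laplacian; under [RHS]eq_bigr do rewrite !mxE !enum_rankK (inj_eq enum_rank_inj) mulrBl.
rewrite sumrB; congr (_ - _).
rewrite (bigD1 u) //= eqxx big1 ?addr0 ?reg //.
by move=> v /negbTE; rewrite eq_sym => ->; rewrite mul0r.
Qed.

Lemma pm_seq {R : comPzRingType} {T : Type} (f : T -> R) (s : seq T) :
  (forall x, f x = 1 \/ f x = -1) ->
  exists m, (m <= size s)%N /\ \sum_(x <- s) f x = (size s)%:R - (m.*2)%:R.
Proof.
move=> hf; elim: s => [|x s [m [hm IH]]]; first by exists 0%N; rewrite big_nil subr0.
rewrite big_cons IH /=; case: (hf x) => ->.
  by exists m; split; [exact: leqW | rewrite -addn1 natrD; ring].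
exists m.+1; split; first by [].
by rewrite doubleS -addn1 -(addn1 (m.*2).+1) -addn1 !natrD; ring.
Qed.

Lemma lam_even {R : realFieldType} {V : finType} (e : rel V) (d : nat) (H : 'M[R]_#|V|) (lam : 'rV[R]_#|V|) :
  regular e d -> (forall i j, H i j = 1 \/ H i j = -1) -> laplacian R e *m H = H *m diag_mx lam ->
  V -> forall w : 'I_#|V|, exists k, lam 0 w = (k.*2)%:R.
Proof.
move=> reg hpm LH u w.
have := @lap_row R V e d H lam reg LH u (enum_val w); rewrite enum_valK.
have -> : \sum_v (e u v)%:R * hf H v (enum_val w) = \sum_(v <- enum [set v | e u v]) hf H v (enum_val w).
  rewrite big_enum /= [RHS]big_mkcond; apply: eq_bigr => v _; rewrite inE.
  by case: (e u v); rewrite ?mul1r ?mul0r.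
have [m [hm ->]] := pm_seq (fun v => hf H v (enum_val w)) (enum [set v | e u v]) (fun v => hpm _ _).
rewrite -cardE reg in hm *.
rewrite /hf enum_valK; case: (hpm (enum_rank u) w) => -> hyp.
  by exists m; rewrite mul1r in hyp; rewrite -hyp; ring.
exists (d - m)%N; rewrite doubleB natrB ?leq_double //.
rewrite -!muln2 !natrM; rewrite -!muln2 !natrM in hyp; lra.
Qed.

Lemma sgsum2 {R : comPzRingType} (l l' : 'I_2) :
  \sum_(m < 2) (sg m l * sg m l' * (if m == ord0 then 1 else -1) : R) = (l != l')%:R * 2.
Proof.
rewrite sum2 /sg /=.
by case: (two_cases l) => ->; case: (two_cases l') => -> /=; rewrite /= ?expr0 ?expr1; ring.
Qed.

Definition pf {R : pzRingType} {V : finType} (H : 'M[R]_#|V|) (x y : 'I_2 * V) : R :=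
  sg y.1 x.1 * hf H x.2 y.2.
Definition Pmx {R : pzRingType} {V : finType} (H : 'M[R]_#|V|) :=
  MX (pf H).
Definition Qmx {R : fieldType} {V : finType} (H : 'M[R]_#|V|) :=
  MX (fun x y => (2 * #|V|)%:R^-1 * pf H y x).

Lemma sum_pair {R : comPzRingType} {V : finType} (F : 'I_2 -> R) (G : V -> R) (c : R) :
  \sum_(x : 'I_2 * V) c * (F x.1 * G x.2) = c * ((\sum_l F l) * (\sum_v G v)).
Proof.
rewrite -(pair_bigA _ (fun l v => c * (F l * G v))) mulr_suml mulr_sumr; apply: eq_bigr => l _.
by rewrite mulr_sumr mulr_sumr; apply: eq_bigr => v _.
Qed.

Lemma QP {R : realFieldType} {V : finType} (H : 'M[R]_#|V|) :
  H^T *m H = #|V|%:R%:M -> #|V|%:R != 0 :> R -> Qmx H *m Pmx H = 1%:M.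
Proof.
move=> HtH N0; rewrite /Qmx /Pmx mulMX oneMX; apply: MX_eq => -[m w] [m' w'].
rewrite (eq_bigr (fun x : 'I_2 * V => (2 * #|V|)%:R^-1 * ((sg m x.1 * sg m' x.1) * (hf H x.2 w * hf H x.2 w')))); last first.
  by move=> x _; rewrite /pf /=; ring.
rewrite (sum_pair (fun l => sg m l * sg m' l) (fun v => hf H v w * hf H v w')) sgsum HtH_fun // xpair_eqE.
have two0 : (2 : R) != 0 by rewrite pnatr_eq0.
by case: (m == m'); case: (w == w'); rewrite /= ?mul0r ?mulr0 ?mul1r // natrM; field.
Qed.

Definition lf {R : pzRingType} {V : finType} (e : rel V) (d : nat) (x y : 'I_2 * V) : R :=
  (x == y)%:R * (2 * d)%:R - (e x.2 y.2)%:R.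

Lemma L2E {R : pzRingType} {V : finType} (e : rel V) (d : nat) :
  regular e d -> laplacian R (blowup2 e) = MX (lf e d).
Proof.
move=> reg; apply/matrixP => i j; rewrite /laplacian MXE !mxE /lf (inj_eq enum_val_inj).
congr (_ - _); case: eqP => _; rewrite ?mul1r ?mul0r //.
have -> : [set y | blowup2 e (enum_val i) y] = finset.setX [set: 'I_2] [set w | e (enum_val i).2 w].
  by apply/setP => y; rewrite !inE /blowup2.
by rewrite cardsX cardsT card_ord reg.
Qed.

Definition muf {R : pzRingType} {V : finType} (lam : 'rV[R]_#|V|) (d : nat) (x : 'I_2 * V) : R :=
  if x.1 == ord0 then 2 * lam 0 (enum_rank x.2) else 2 * d%:R.

Lemma L2P {R : realFieldType} {V : finType} (e : rel V) (d : nat) (H : 'M[R]_#|V|) (lam : 'rV[R]_#|V|) :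
  regular e d -> laplacian R e *m H = H *m diag_mx lam ->
  laplacian R (blowup2 e) *m Pmx H = Pmx H *m diag_mx (\row_k muf lam d (enum_val k)).
Proof.
move=> reg LH; rewrite (@L2E R V e d reg) /Pmx mulMX.
have -> : MX (pf H) *m diag_mx (\row_k muf lam d (enum_val k)) = MX (fun x y => pf H x y * muf lam d y).
  by rewrite mul_mx_diag; apply/matrixP => i j; rewrite !mxE.
apply: MX_eq => -[l u] [m w].
rewrite /lf; under eq_bigr do rewrite mulrBl.
rewrite sumrB (bigD1 (l, u)) //= eqxx mul1r big1 ?addr0; last first.
  by move=> x /negbTE; rewrite eq_sym => ->; rewrite !mul0r.
rewrite (eq_bigr (fun x : 'I_2 * V => 1 * (sg m x.1 * ((e u x.2)%:R * hf H x.2 w)))); last first.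
  by move=> x _; rewrite /pf /=; ring.
rewrite (sum_pair (fun l => sg m l) (fun v => (e u v)%:R * hf H v w)) mul1r.
have := @lap_row R V e d H lam reg LH u w.
move=> hrow.
have -> : \sum_v (e u v)%:R * hf H v w = d%:R * hf H u w - hf H u w * lam 0 (enum_rank w).
  by rewrite -hrow; ring.
rewrite sum2 /pf /muf /sg /=.
case: (two_cases m) => -> /=; rewrite ?eqxx /=.
  by rewrite natrM; ring.
by rewrite expr1 natrM; ring.
Qed.

Definition zf {R : pzRingType} {V : finType} (x : 'I_2 * V) : R := if x.1 == ord0 then 1 else -1.
Definition swf {R : pzRingType} {V : finType} (x y : 'I_2 * V) : R := ((x.2 == y.2) && (x.1 != y.1))%:R.

Lemma Swap {R : realFieldType} {V : finType} (H : 'M[R]_#|V|) :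
  H *m H^T = #|V|%:R%:M -> #|V|%:R != 0 :> R ->
  Pmx H *m diag_mx (\row_k zf (enum_val k)) *m Qmx H = MX swf.
Proof.
move=> HHt N0; rewrite /Pmx /Qmx.
have -> : MX (pf H) *m diag_mx (\row_k zf (enum_val k)) = MX (fun x y => pf H x y * zf y).
  by rewrite mul_mx_diag; apply/matrixP => i j; rewrite !mxE.
rewrite mulMX; apply: MX_eq => -[l u] [l' u'].
rewrite (eq_bigr (fun x : 'I_2 * V => (2 * #|V|)%:R^-1 * ((sg x.1 l * sg x.1 l' * (if x.1 == ord0 then 1 else -1)) * (hf H u x.2 * hf H u' x.2)))); last first.
  by move=> x _; rewrite /pf /zf /=; ring.
rewrite (sum_pair (fun m => sg m l * sg m l' * (if m == ord0 then 1 else -1)) (fun w => hf H u w * hf H u' w)).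
rewrite sgsum2 HHt_fun // /swf /=.
have two0 : (2 : R) != 0 by rewrite pnatr_eq0.
by case: (l != l'); case: (u == u'); rewrite /= ?mul0r ?mulr0 ?mul1r // natrM; field.
Qed.

Local Open Scope classical_set_scope.
Local Open Scope complex_scope.
Local Notation Re := complex.Re.
Local Notation Im := complex.Im.

Lemma ReM {R : realType} (x y : R[i]) : Re (x * y) = Re x * Re y - Im x * Im y.
Proof. by case: x => a b; case: y => c d. Qed.
Lemma ImM {R : realType} (x y : R[i]) : Im (x * y) = Re x * Im y + Im x * Re y.
Proof. by case: x => a b; case: y => c d. Qed.
Lemma ReD {R : realType} (x y : R[i]) : Re (x + y) = Re x + Re y.
Proof. by case: x => a b; case: y => c d. Qed.
Lemma ImD {R : realType} (x y : R[i]) : Im (x + y) = Im x + Im y.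
Proof. by case: x => a b; case: y => c d. Qed.

Lemma Re_sum {R : realType} (I : Type) (r : seq I) (P : pred I) (F : I -> R[i]) :
  Re (\sum_(i <- r | P i) F i) = \sum_(i <- r | P i) Re (F i).
Proof. by elim/big_rec2: _ => // i a b _ <-; rewrite ReD. Qed.
Lemma Im_sum {R : realType} (I : Type) (r : seq I) (P : pred I) (F : I -> R[i]) :
  Im (\sum_(i <- r | P i) F i) = \sum_(i <- r | P i) Im (F i).
Proof. by elim/big_rec2: _ => // i a b _ <-; rewrite ImD. Qed.

Definition ccvg {R : realType} (s : nat -> R[i]) (z : R[i]) :=
  (fun n => Re (s n)) @ \oo --> Re z /\ (fun n => Im (s n)) @ \oo --> Im z.

Lemma ccvg_cst {R : realType} (z : R[i]) : ccvg (fun=> z) z.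
Proof. by split; apply: cvg_cst. Qed.

Lemma ccvgD {R : realType} (s t : nat -> R[i]) (a b : R[i]) : ccvg s a -> ccvg t b -> ccvg (fun n => s n + t n) (a + b).
Proof.
move=> [h1 h2] [h3 h4]; split.
  rewrite ReD; under eq_cvg do rewrite ReD; exact: cvgD.
rewrite ImD; under eq_cvg do rewrite ImD; exact: cvgD.
Qed.

Lemma ccvgMl {R : realType} (c : R[i]) (s : nat -> R[i]) (a : R[i]) : ccvg s a -> ccvg (fun n => c * s n) (c * a).
Proof.
move=> [h1 h2]; split.
  rewrite ReM; under eq_cvg do rewrite ReM.
  by apply: cvgB; apply: cvgMl_tmp.
rewrite ImM; under eq_cvg do rewrite ImM.
by apply: cvgD; apply: cvgMl_tmp.
Qed.

Lemma ccvg_sum {R : realType} (I : Type) (r : seq I) (F : I -> nat -> R[i]) (z : I -> R[i]) :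
  (forall i, ccvg (F i) (z i)) ->
  ccvg (fun n => \sum_(i <- r) F i n) (\sum_(i <- r) z i).
Proof.
move=> h; elim: r => [|a r IH].
  rewrite big_nil; under [fun n => _]funext do rewrite big_nil.
  exact: ccvg_cst.
rewrite big_cons; under [fun n => _]funext do rewrite big_cons.
exact: ccvgD.
Qed.

Lemma iX {R : realType} (j : nat) : 'i ^+ j = (if odd j then 'i * ((-1)^+(j./2))%:C else ((-1)^+(j./2))%:C) :> R[i].
Proof.
rewrite -{1}(odd_double_half j) exprD -muln2 mulnC exprM sqr_i rmorphXn rmorphN1.
by case: (odd j); rewrite ?expr1 ?expr0 ?mul1r.
Qed.

Lemma half_pred_odd (j : nat) : odd j -> j.-1./2 = j./2.
Proof. by move=> h; rewrite -{1}(odd_double_half j) h /= doubleK. Qed.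

Lemma exp_i {R : realType} (y : R) :
  ccvg (fun n => \sum_(j < n) ((j`!%:R)^-1 * ('i * y%:C) ^+ j)) ((cos y) +i* (sin y)).
Proof.
have term j : ((j`!%:R)^-1 * ('i * y%:C) ^+ j) = (cos_coeff y j) +i* (sin_coeff y j).
  rewrite exprMn iX -rmorphXn -(rmorph_nat (real_complex R)) -fmorphV.
  rewrite /cos_coeff /sin_coeff /=.
  apply/eqP; rewrite eq_complex /=.
  case Ho: (odd j) => /=; simpc; rewrite /= -?exprnP ?andbT.
    by rewrite (@half_pred_odd j Ho) mulrC.
  by rewrite mulrC.
split.
  have -> : (fun n => Re (\sum_(j < n) ((j`!%:R)^-1 * ('i * y%:C) ^+ j))) = series (cos_coeff y).
    apply/funext => n; rewrite /series /= big_mkord Re_sum; apply: eq_bigr => j _.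
    by rewrite term.
  have -> : cos y = lim (series (cos_coeff y) @ \oo) by rewrite unlock.
  exact: is_cvg_series_cos_coeff.
have -> : (fun n => Im (\sum_(j < n) ((j`!%:R)^-1 * ('i * y%:C) ^+ j))) = series (sin_coeff y).
  apply/funext => n; rewrite /series /= big_mkord Im_sum; apply: eq_bigr => j _.
  by rewrite term.
have -> : sin y = lim (series (sin_coeff y) @ \oo) by rewrite unlock.
exact: is_cvg_series_sin_coeff.
Qed.

Lemma entry_PDQ {R : realType} n (P Q : 'M[R[i]]_n) (d : 'rV[R[i]]_n) i j :
  (P *m diag_mx d *m Q) i j = \sum_k P i k * d 0 k * Q k j.
Proof. by rewrite mul_mx_diag mxE; apply: eq_bigr => k _; rewrite mxE. Qed.

Lemma expmx_diag {R : realType} n (P Q : 'M[R[i]]_n) (mu z : 'I_n -> R[i]) :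
  P *m Q = 1%:M -> Q *m P = 1%:M ->
  (forall k, ccvg (fun m => \sum_(j < m) ((j`!%:R)^-1 * (mu k) ^+ j)) (z k)) ->
  is_expmx (P *m diag_mx (\row_k mu k) *m Q) (P *m diag_mx (\row_k z k) *m Q).
Proof.
move=> PQ QP hz.
have pw j : (P *m diag_mx (\row_k mu k) *m Q) ^+ j = P *m diag_mx (\row_k (mu k) ^+ j) *m Q.
  elim: j => [|j IH].
    rewrite expr0.
    have -> : (\row_k (mu k) ^+ 0) = const_mx 1 by apply/matrixP => a b; rewrite !mxE expr0.
    by rewrite diag_const_mx mulmx1 PQ.
  rewrite exprS IH -mulmxE -!mulmxA (mulmxA Q P) QP mul1mx (mulmxA (diag_mx _)) mulmx_diag !mulmxA.
  congr (_ *m diag_mx _ *m _); apply/matrixP => a b; rewrite !mxE exprS.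
  done.
move=> i j.
suff h : ccvg (fun k => expmx_partial (P *m diag_mx (\row_k mu k) *m Q) k i j) ((P *m diag_mx (\row_k z k) *m Q) i j) by exact: h.
have ->: (fun k => expmx_partial (P *m diag_mx (\row_k mu k) *m Q) k i j) =
   (fun m => \sum_k (P i k * Q k j) * (\sum_(l < m) ((l`!%:R)^-1 * (mu k) ^+ l))).
  apply/funext => m; rewrite /expmx_partial summxE.
  under eq_bigr do rewrite mxE pw entry_PDQ mulr_sumr.
  rewrite exchange_big /=; apply: eq_bigr => k _; rewrite mulr_sumr; apply: eq_bigr => l _.
  rewrite mxE; ring.
rewrite entry_PDQ.
have := @ccvg_sum _ _ (index_enum 'I_n) (fun k m => (P i k * Q k j) * (\sum_(l < m) ((l`!%:R)^-1 * (mu k) ^+ l)))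
  (fun k => P i k * (\row_k z k) 0 k * Q k j).
apply => k; rewrite mxE (mulrC (P i k)) -mulrA (mulrC (z k)) mulrA (mulrC (Q k j)).
exact: ccvgMl.
Qed.



Lemma cos_npi {R : realType} (n : nat) : cos (pi *+ n) = (-1) ^+ n :> R.
Proof. by rewrite -[pi *+ n]add0r (alternatingn (@cosDpi R)) cos0 mulr1. Qed.
Lemma sin_npi {R : realType} (n : nat) : sin (pi *+ n) = 0 :> R.
Proof. by rewrite -[pi *+ n]add0r (alternatingn (@sinDpi R)) sin0 mulr0. Qed.

Theorem corollary5 (R : realType) (V : finType) (e : rel V) (d : nat) :
  simple_graph e -> regular e d -> hadamard_diagonalizable R e -> odd d ->
  forall u : V,
    laplacian_pst (blowup2 e) (ord0, u) (ord_max, u) (pi / 2 :> R).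
Proof.
move=> _ reg [H [lam [[hpm HHt] HL]]] dodd u.
have N0 : #|V|%:R != 0 :> R by rewrite pnatr_eq0 -lt0n; apply/card_gt0P; exists u.
have HtH := @HtH_mx _ _ _ HHt N0.
have LH := @eigen_mx _ _ _ _ _ HHt N0 HL.
have QP := @QP _ _ H HtH N0.
have PQ := mulmx1C QP.
have L2 : laplacian R (blowup2 e) = Pmx H *m diag_mx (\row_k muf lam d (enum_val k)) *m Qmx H.
  by rewrite -(@L2P _ _ e d H lam reg LH) -mulmxA PQ mulmx1.
have fE : (fun x : R => x%:C) = real_complex R by [].
set Pc := map_mx (real_complex R) (Pmx H).
set Qc := map_mx (real_complex R) (Qmx H).
have PQc : Pc *m Qc = 1%:M by rewrite -map_mxM PQ map_mx1.
have QPc : Qc *m Pc = 1%:M by rewrite -map_mxM QP map_mx1.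
exists (Pc *m diag_mx (\row_k (zf (enum_val k) : R)%:C) *m Qc); split.
  rewrite fE L2 !map_mxM map_diag_mx scalemxAl scalemxAr.
  rewrite [_ *: diag_mx _](_ : _ = diag_mx (\row_k ('i * (pi / 2 * muf lam d (enum_val k))%:C))); last first.
    by apply/matrixP => a b; rewrite !mxE mulrnAr [in RHS]rmorphM mulrA.
  change (is_expmx (Pc *m diag_mx (\row_k ('i * (pi / 2 * muf lam d (enum_val k))%:C)) *m Qc) (Pc *m diag_mx (\row_k (zf (enum_val k) : R)%:C) *m Qc)).
  apply: (@expmx_diag R _ Pc Qc (fun k => 'i * (pi / 2 * muf lam d (enum_val k))%:C) (fun k => (zf (enum_val k) : R)%:C) PQc QPc) => k.
  have -> : (zf (enum_val k) : R)%:C = cos (pi / 2 * muf lam d (enum_val k)) +i* sin (pi / 2 * muf lam d (enum_val k)); last exact: exp_i.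
  rewrite /muf /zf; case: (enum_val k) => m w /=; case: (two_cases m) => -> /=.
    have [n ->] := @lam_even R V e d H lam reg hpm LH u (enum_rank w).
    have -> : pi / 2 * (2 * (n.*2)%:R) = pi *+ n.*2 :> R by rewrite -mulr_natr; field.
    by rewrite cos_npi sin_npi -signr_odd odd_double expr0.
  have -> : pi / 2 * (2 * d%:R) = pi *+ d :> R by rewrite -mulr_natr; field.
  by rewrite cos_npi sin_npi -signr_odd dodd expr1.
have -> : Pc *m diag_mx (\row_k (zf (enum_val k) : R)%:C) *m Qc = map_mx (real_complex R) (MX swf).
  rewrite -(@Swap _ _ H HHt N0) !map_mxM map_diag_mx; congr (_ *m diag_mx _ *m _).
  by apply/matrixP => a b; rewrite !mxE.
exists 1; rewrite scale1r; apply/matrixP => i j; rewrite !mxE.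
rewrite (bigD1 (enum_rank (ord0, u))) //= big1 ?addr0; last first.
  by move=> k /negbTE hk; rewrite /basis_vec !mxE hk mulr0.
rewrite /basis_vec !mxE eqxx mulr1 enum_rankK.
have -> : (i == enum_rank (ord_max, u)) = (enum_val i == (ord_max, u)).
  by rewrite -(inj_eq enum_val_inj) enum_rankK.
rewrite /swf; case: (enum_val i) => l v /=; rewrite xpair_eqE.
case: (two_cases l) => -> /=; rewrite ?eqxx ?andbT ?andbF /=.
  by [].
by case: (v == u).
Qed.
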